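(* Let $N\ge1$, $T>0$, $\sigma>0$, $\lambda>0$, $\kappa>0$, let the cost function be $g(z)=\kappa z$, and let all $N$ players be risk neutral with claims $H^j\in\mathcal{C}^2_b(\mathbb{R})$ satisfying $\sum_{i=1}^N H^i=0$. Let $(v^1,\dots,v^N)$ be the classical solution of $$0=v^j_t+\tfrac12\sigma^2v^j_{pp}+\lambda\dot X^*\,v^j_p-\kappa\,\dot X^j\,\dot X^*,\qquad v^j(T,p)=H^j(p),\quad j=1,\dots,N,$$ with equilibrium trading speeds $\dot X^j=\frac{\lambda}{\kappa}\Big(v^j_p-\frac{1}{N+1}\sum_{i=1}^Nv^i_p\Big)$ and $\dot X^*=\sum_{i=1}^N\dot X^i=\frac{\lambda}{\kappa(N+1)}\sum_{i=1}^Nv^i_p$. Then the aggregate equilibrium trading speed vanishes identically: $\sum_{i=1}^N\dot X^i\equiv0$.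
   Context: Setting: players $j=1,\dots,N$ hold cash-settled claims $H^j(P_T)$ on a stock with price $dP_t=\sigma dB_t+\lambda\sum_i\dot X^i_t dt$, where $X^i$ is player $i$'s (absolutely continuous) holding with $X^i_0=0$, and player $j$ maximizes $\mathbb{E}[-\int_0^T\dot X^j_t\,g(\sum_i\dot X^i_t)dt+H^j(P_T)]$. The functions $v^j$ are the players' value functions and the formulas for $\dot X^j$ give the Nash equilibrium feedback trading speeds. $\mathcal{C}^2_b$ denotes functions bounded together with derivatives up to order 2. *)

(* Defs.v *)
From Stdlib Require Import Reals.
From Coquelicot Require Import Coquelicot.
Open Scope R_scope.

(* sumN N f = f 0 + ... + f (N-1)  (players are indexed by 0..N-1) *)
Fixpoint sumN (N : nat) (f : nat -> R) : R :=
  match N with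
  | O => 0
  | S n => sumN n f + f n
  end.

Definition cont_on_strip (T : R) (f : R -> R -> R) : Prop :=
  forall t p, 0 <= t <= T ->
  forall eps, 0 < eps -> exists delta, 0 < delta /\
    forall t' p', 0 <= t' <= T -> Rabs (t' - t) < delta -> Rabs (p' - p) < delta ->
      Rabs (f t' p' - f t p) < eps.

Definition cont_on_open_strip (T : R) (f : R -> R -> R) : Prop :=
  forall t p, 0 < t < T ->
  forall eps, 0 < eps -> exists delta, 0 < delta /\
    forall t' p', 0 < t' < T -> Rabs (t' - t) < delta -> Rabs (p' - p) < delta ->
      Rabs (f t' p' - f t p) < eps.

Definition bounded_on_strip (T : R) (f : R -> R -> R) : Prop :=
  exists M, forall t p, 0 <= t <= T -> Rabs (f t p) <= M.

Definition C2b (H : R -> R) : Prop :=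
  exists H1 H2 : R -> R,
    (forall p, is_derive H p (H1 p)) /\
    (forall p, is_derive H1 p (H2 p)) /\
    (forall p, continuous H2 p) /\
    (exists M, forall p, Rabs (H p) <= M /\ Rabs (H1 p) <= M /\ Rabs (H2 p) <= M).

Definition Xdot (N : nat) (lam kap : R) (vp : nat -> R -> R -> R)
    (j : nat) (t p : R) : R :=
  lam / kap * (vp j t p - / (INR N + 1) * sumN N (fun i => vp i t p)).

Definition Xstar (N : nat) (lam kap : R) (vp : nat -> R -> R -> R) (t p : R) : R :=
  sumN N (fun i => Xdot N lam kap vp i t p).

Definition classical_solution (N : nat) (T sigma lam kap : R)
    (H : nat -> R -> R)
    (v vt vp vpp : nat -> R -> R -> R) : Prop :=
  forall j, (j < N)%nat ->
    (forall t p, 0 < t < T -> is_derive (fun s => v j s p) t (vt j t p)) /\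
    (forall t p, 0 <= t <= T -> is_derive (fun q => v j t q) p (vp j t p)) /\
    (forall t p, 0 <= t <= T -> is_derive (fun q => vp j t q) p (vpp j t p)) /\
    cont_on_strip T (v j) /\ cont_on_strip T (vp j) /\ cont_on_strip T (vpp j) /\
    cont_on_open_strip T (vt j) /\
    bounded_on_strip T (v j) /\ bounded_on_strip T (vp j) /\
    (forall p, v j T p = H j p) /\
    (forall t p, 0 < t < T ->
       0 = vt j t p + / 2 * sigma ^ 2 * vpp j t p
           + lam * Xstar N lam kap vp t p * vp j t p
           - kap * Xdot N lam kap vp j t p * Xstar N lam kap vp t p).

(* Main.v *)
Require Import Defs.
From Stdlib Require Import Reals Lra Psatz Classical ClassicalEpsilon.
From Coquelicot Require Import Coquelicot.
Open Scope R_scope.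

Lemma rmax_lem f x l : derivable_pt_lim f x l -> forall d, 0 < d ->
  (forall h, 0 < h < d -> f (x + h) <= f x) -> l <= 0.
Proof.
  intros Hl d Hd Hm. destruct (Rle_or_lt l 0) as [H|H]; auto. exfalso.
  destruct (Hl l H) as [del Hdel].
  set (h := Rmin (del/2) (d/2)).
  assert (Hh0 : 0 < h) by (unfold h; apply Rmin_pos; pose proof (cond_pos del); lra).
  assert (Hh1 : h < del) by (unfold h; pose proof (Rmin_l (del/2) (d/2)); pose proof (cond_pos del); lra).
  assert (Hh2 : h < d) by (unfold h; pose proof (Rmin_r (del/2) (d/2)); lra).
  assert (Hq := Hdel h ltac:(lra) ltac:(rewrite Rabs_pos_eq; lra)).
  apply Rabs_def2 in Hq. destruct Hq as [_ Hq].
  assert (E : (f (x + h) - f x) / h * h = f (x + h) - f x) by (field; lra).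
  specialize (Hm h ltac:(lra)).
  assert (0 < (f (x + h) - f x) / h) by lra. nra.
Qed.

Lemma lmax_lem f x l : derivable_pt_lim f x l -> forall d, 0 < d ->
  (forall h, - d < h < 0 -> f (x + h) <= f x) -> 0 <= l.
Proof.
  intros Hl d Hd Hm. destruct (Rle_or_lt 0 l) as [H|H]; auto. exfalso.
  destruct (Hl (-l) ltac:(lra)) as [del Hdel].
  set (h := - Rmin (del/2) (d/2)).
  assert (Hh0 : 0 < Rmin (del/2) (d/2)) by (apply Rmin_pos; pose proof (cond_pos del); lra).
  assert (Hh1 : Rmin (del/2) (d/2) < del) by (pose proof (Rmin_l (del/2) (d/2)); pose proof (cond_pos del); lra).
  assert (Hh2 : Rmin (del/2) (d/2) < d) by (pose proof (Rmin_r (del/2) (d/2)); lra).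
  assert (Hq := Hdel h ltac:(unfold h; lra) ltac:(unfold h; rewrite Rabs_Ropp, Rabs_pos_eq; lra)).
  apply Rabs_def2 in Hq. destruct Hq as [Hq _].
  assert (E : (f (x + h) - f x) / h * h = f (x + h) - f x) by (field; unfold h; lra).
  specialize (Hm h ltac:(unfold h; lra)).
  assert ((f (x + h) - f x) / h < 0) by lra. unfold h in *. nra.
Qed.

Lemma d2max_lem f f' c l : (forall x, derivable_pt_lim f x (f' x)) ->
  derivable_pt_lim f' c l -> f' c = 0 -> (forall x, f x <= f c) -> l <= 0.
Proof.
  intros Hf Hl H0 Hm. destruct (Rle_or_lt l 0) as [H|H]; auto. exfalso.
  destruct (Hl l H) as [del Hdel].
  set (h := del / 2).
  assert (Hpos : forall y, 0 < y < del -> 0 < f' (c + y)).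
  { intros y Hy. assert (Hq := Hdel y ltac:(lra) ltac:(rewrite Rabs_pos_eq; lra)).
    apply Rabs_def2 in Hq. destruct Hq as [_ Hq]. rewrite H0 in Hq.
    assert (E : (f' (c + y) - 0) / y * y = f' (c + y)) by (field; lra).
    assert (0 < (f' (c + y) - 0) / y) by lra. nra. }
  pose proof (cond_pos del).
  destruct (MVT_cor2 f f' c (c + h) ltac:(unfold h; lra) (fun x _ => Hf x)) as [xi [E Hxi]].
  assert (0 < f' xi).
  { replace xi with (c + (xi - c)) by ring. apply Hpos. unfold h in Hxi. lra. }
  specialize (Hm (c + h)). unfold h in *. nra.
Qed.

Lemma evt2 (f : R -> R -> R) a b c d : a <= b -> c <= d ->
  (forall u v, a <= u <= b -> c <= v <= d -> forall eps, 0 < eps ->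
     exists delta, 0 < delta /\ forall u' v', a <= u' <= b -> c <= v' <= d ->
       Rabs (u' - u) < delta -> Rabs (v' - v) < delta -> Rabs (f u' v' - f u v) < eps) ->
  (exists M, forall u v, a <= u <= b -> c <= v <= d -> f u v <= M) ->
  exists u v, a <= u <= b /\ c <= v <= d /\
    forall u' v', a <= u' <= b -> c <= v' <= d -> f u' v' <= f u v.
Proof.
  intros Hab Hcd Hc [M HM].
  set (E := fun y => exists u v, a <= u <= b /\ c <= v <= d /\ y = f u v).
  assert (Hbd : bound E).
  { exists M. intros y [u [v [Hu [Hv ->]]]]. auto. }
  assert (Hne : exists y, E y).
  { exists (f a c). exists a, c. repeat split; lra. }
  destruct (completeness E Hbd Hne) as [m [Hub Hlub]].
  apply NNPP; intro Hno.
  assert (Hlt : forall u v, a <= u <= b -> c <= v <= d -> f u v < m).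
  { intros u v Hu Hv. assert (f u v <= m) by (apply Hub; exists u, v; auto).
    destruct H as [H|H]; auto. exfalso. apply Hno. exists u, v. repeat split; try tauto.
    intros u' v' Hu' Hv'. rewrite H. apply Hub. exists u', v'. auto. }
  assert (Hd : forall u v, exists dd : posreal, (a <= u <= b -> c <= v <= d ->
     dd <= m - f u v /\ forall u' v', a <= u' <= b -> c <= v' <= d ->
       Rabs (u' - u) < dd -> Rabs (v' - v) < dd -> f u' v' < f u v + (m - f u v) / 2)).
  { intros u v. destruct (classic (a <= u <= b /\ c <= v <= d)) as [[Hu Hv]|Hn].
    - pose proof (Hlt u v Hu Hv) as Hl.
      destruct (Hc u v Hu Hv ((m - f u v) / 2) ltac:(lra)) as [del [Hdel Hdel2]].
      assert (Hp : 0 < Rmin del (m - f u v)) by (apply Rmin_pos; lra).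
      exists (mkposreal _ Hp). simpl. intros _ _. split.
      + apply Rmin_r.
      + intros u' v' Hu' Hv' H1 H2.
        pose proof (Rmin_l del (m - f u v)).
        specialize (Hdel2 u' v' Hu' Hv' ltac:(lra) ltac:(lra)).
        apply Rabs_def2 in Hdel2. lra.
    - exists (mkposreal 1 Rlt_0_1). intros Hu Hv. exfalso; auto. }
  set (delta := fun u v => proj1_sig (constructive_indefinite_description _ (Hd u v))).
  destruct (compactness_value_2d a b c d delta) as [dd Hdd].
  assert (Hup : forall u v, a <= u <= b -> c <= v <= d -> f u v <= m - dd / 2).
  { intros u v Hu Hv. apply NNPP; intro Hn. apply (Hdd u v Hu Hv).
    intros [u0 [v0 [Hu0 [Hv0 [H1 [H2 H3]]]]]]. apply Hn.
    pose proof (proj2_sig (constructive_indefinite_description _ (Hd u0 v0))) as Hp.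
    unfold delta in H1, H2, H3. destruct (Hp Hu0 Hv0) as [Hp1 Hp2].
    specialize (Hp2 u v Hu Hv H1 H2). lra. }
  assert (m <= m - dd / 2).
  { apply Hlub. intros y [u [v [Hu [Hv ->]]]]. auto. }
  pose proof (cond_pos dd). lra.
Qed.

Lemma poly_cont (A B C t p eps : R) : 0 < eps -> exists delta, 0 < delta /\
  forall t' p', Rabs (t' - t) < delta -> Rabs (p' - p) < delta ->
  Rabs ((A * p' ^ 2 + B * t' + C) - (A * p ^ 2 + B * t + C)) < eps.
Proof.
  intros He.
  set (K := Rabs A * (2 * Rabs p + 1) + Rabs B + 1).
  assert (HK : 0 < K) by (unfold K; pose proof (Rabs_pos A); pose proof (Rabs_pos B); pose proof (Rabs_pos p); nra).
  exists (Rmin 1 (eps / K)). split.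
  { apply Rmin_pos; [lra|]. apply Rdiv_lt_0_compat; lra. }
  intros t' p' Ht Hp.
  pose proof (Rmin_l 1 (eps / K)) as Hm1. pose proof (Rmin_r 1 (eps / K)) as Hm2.
  set (dl := Rmin 1 (eps / K)) in *.
  assert (HdK : dl * K <= eps).
  { apply (Rmult_le_compat_r K) in Hm2; [|lra]. unfold Rdiv in Hm2.
    rewrite Rmult_assoc, Rinv_l, Rmult_1_r in Hm2; lra. }
  replace ((A * p' ^ 2 + B * t' + C) - (A * p ^ 2 + B * t + C)) with
    (A * ((p' - p) * (2 * p + (p' - p))) + B * (t' - t)) by ring.
  eapply Rle_lt_trans; [apply Rabs_triang|]. rewrite !Rabs_mult.
  assert (HY : Rabs (2 * p + (p' - p)) <= 2 * Rabs p + 1).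
  { eapply Rle_trans; [apply Rabs_triang|]. rewrite Rabs_mult, (Rabs_pos_eq 2) by lra. lra. }
  pose proof (Rabs_pos A) as P1. pose proof (Rabs_pos B) as P2. pose proof (Rabs_pos (p' - p)) as P3.
  pose proof (Rabs_pos (2 * p + (p' - p))) as P4. pose proof (Rabs_pos (t' - t)) as P5.
  assert (H1 : Rabs (p' - p) * Rabs (2 * p + (p' - p)) <= dl * (2 * Rabs p + 1)).
  { apply Rmult_le_compat; lra. }
  assert (H2 : Rabs A * (Rabs (p' - p) * Rabs (2 * p + (p' - p))) <= Rabs A * (dl * (2 * Rabs p + 1))).
  { apply Rmult_le_compat_l; lra. }
  assert (H3 : Rabs B * Rabs (t' - t) <= Rabs B * dl) by (apply Rmult_le_compat_l; lra).
  unfold K in HdK. nra.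
Qed.

Lemma sumN_ext N f g : (forall i, (i < N)%nat -> f i = g i) -> sumN N f = sumN N g.
Proof.
  induction N; intros H; simpl; auto.
  rewrite IHN by (intros; apply H; lia). rewrite H by lia. auto.
Qed.

Lemma sumN_zero N : sumN N (fun _ => 0) = 0.
Proof. induction N; simpl; auto. rewrite IHN; ring. Qed.

Lemma sumN_lin N (a b d e : nat -> R) c1 c2 c3 c4 :
  sumN N (fun j => a j + c1 * b j + c2 * d j - c3 * e j * c4) =
  sumN N a + c1 * sumN N b + c2 * sumN N d - c3 * sumN N e * c4.
Proof. induction N; simpl. ring. rewrite IHN; ring. Qed.

Lemma sumN_Xd N (f : nat -> R) k s :
  sumN N (fun i => k * (f i - s)) = k * (sumN N f - INR N * s).
Proof. induction N; simpl sumN. simpl; ring. rewrite IHN, S_INR; ring. Qed.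

Lemma is_derive_sumN N (F : nat -> R -> R) (dF : nat -> R) x :
  (forall i, (i < N)%nat -> is_derive (F i) x (dF i)) ->
  is_derive (fun y => sumN N (fun i => F i y)) x (sumN N dF).
Proof.
  induction N; intros H; simpl.
  - apply (is_derive_const (fun _ => 0) 0 x) || exact (is_derive_const (K:=R_AbsRing) (V:=R_NormedModule) 0 x).
  - apply (is_derive_plus (fun y => sumN N (fun i => F i y)) (F N)).
    + apply IHN; intros; apply H; lia.
    + apply H; lia.
Qed.

Lemma cont_sumN N T (f : nat -> R -> R -> R) :
  (forall i, (i < N)%nat -> cont_on_strip T (f i)) ->
  cont_on_strip T (fun t p => sumN N (fun i => f i t p)).
Proof.
  induction N; intros H; simpl.
  - intros t p _ eps He. exists 1. split; [lra|]. intros. rewrite Rminus_diag, Rabs_R0; auto.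
  - intros t p Ht eps He.
    destruct (IHN ltac:(intros; apply H; lia) t p Ht (eps/2) ltac:(lra)) as [d1 [Hd1 H1]].
    destruct (H N ltac:(lia) t p Ht (eps/2) ltac:(lra)) as [d2 [Hd2 H2]].
    exists (Rmin d1 d2). split; [apply Rmin_pos; auto|].
    intros t' p' Ht' Ha Hb.
    pose proof (Rmin_l d1 d2); pose proof (Rmin_r d1 d2).
    specialize (H1 t' p' Ht' ltac:(lra) ltac:(lra)).
    specialize (H2 t' p' Ht' ltac:(lra) ltac:(lra)).
    replace (sumN N (fun i => f i t' p') + f N t' p' - (sumN N (fun i => f i t p) + f N t p))
      with ((sumN N (fun i => f i t' p') - sumN N (fun i => f i t p)) + (f N t' p' - f N t p)) by ring.
    eapply Rle_lt_trans; [apply Rabs_triang|]. lra.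
Qed.

Lemma bnd_sumN N T (f : nat -> R -> R -> R) :
  (forall i, (i < N)%nat -> bounded_on_strip T (f i)) ->
  exists M, forall t p, 0 <= t <= T -> Rabs (sumN N (fun i => f i t p)) <= M.
Proof.
  induction N; intros H; simpl.
  - exists 0. intros. rewrite Rabs_R0; lra.
  - destruct (IHN ltac:(intros; apply H; lia)) as [M1 H1].
    destruct (H N ltac:(lia)) as [M2 H2].
    exists (M1 + M2). intros t p Ht.
    eapply Rle_trans; [apply Rabs_triang|]. specialize (H1 t p Ht); specialize (H2 t p Ht). lra.
Qed.

Lemma maxp (T sigma alpha : R) (W Wt Wp Wpp : R -> R -> R) :
  0 < T -> 0 <= alpha ->
  (forall t p, 0 < t < T -> is_derive (fun s => W s p) t (Wt t p)) ->
  (forall t p, 0 <= t <= T -> is_derive (fun q => W t q) p (Wp t p)) ->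
  (forall t p, 0 <= t <= T -> is_derive (fun q => Wp t q) p (Wpp t p)) ->
  cont_on_strip T W ->
  (exists M, forall t p, 0 <= t <= T -> W t p <= M) ->
  (forall p, W T p <= 0) ->
  (forall t p, 0 < t < T -> 0 <= Wt t p + / 2 * sigma ^ 2 * Wpp t p + alpha * Wp t p ^ 2) ->
  forall t p, 0 <= t <= T -> W t p <= 0.
Proof.
  intros HT Ha HWt HWp HWpp Hc [M HM] HTm Hpde t p Htp.
  destruct (Rle_or_lt (W t p) 0) as [H|Hw]; auto. exfalso.
  assert (Ht0 : exists t0, 0 < t0 < T /\ 0 < W t0 p).
  { destruct (Req_dec t T) as [->|HnT]. { specialize (HTm p); lra. }
    destruct (Req_dec t 0) as [->|Hn0].
    - destruct (Hc 0 p Htp (W 0 p / 2) ltac:(lra)) as [d [Hd Hd2]].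
      set (t1 := Rmin (d/2) (T/2)).
      assert (0 < t1) by (apply Rmin_pos; lra).
      assert (t1 < d) by (pose proof (Rmin_l (d/2) (T/2)); unfold t1 in *; lra).
      assert (t1 < T) by (pose proof (Rmin_r (d/2) (T/2)); unfold t1 in *; lra).
      exists t1. split; [lra|].
      specialize (Hd2 t1 p ltac:(lra) ltac:(rewrite Rminus_0_r, Rabs_pos_eq; lra)
        ltac:(rewrite Rminus_diag, Rabs_R0; lra)).
      apply Rabs_def2 in Hd2. lra.
    - exists t. split; [lra|auto]. }
  clear t Htp Hw. destruct Ht0 as [t0 [Ht0 Hw0]]. rename p into p0.
  set (w0 := W t0 p0) in *.
  assert (HM0 : w0 <= M) by (apply HM; lra).
  set (eta := w0 / (4 * (T + 1))).
  assert (Heta : eta * (4 * (T + 1)) = w0) by (unfold eta; field; lra).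
  assert (Heta0 : 0 < eta) by (unfold eta; apply Rdiv_lt_0_compat; lra).
  assert (Hs2 : 0 <= sigma ^ 2) by (apply pow2_ge_0).
  assert (Hp02 : 0 <= p0 ^ 2) by (apply pow2_ge_0).
  set (X := p0 ^ 2 + sigma ^ 2 * T).
  assert (HX : 0 <= X) by (unfold X; nra).
  set (eps := Rmin (w0 / (4 * (X + 1))) (eta / (8 * (alpha + 1) * (M + 1)))).
  assert (Heps0 : 0 < eps).
  { apply Rmin_pos; apply Rdiv_lt_0_compat; nra. }
  assert (Heps1 : eps * (4 * (X + 1)) <= w0).
  { pose proof (Rmin_l (w0 / (4 * (X + 1))) (eta / (8 * (alpha + 1) * (M + 1)))) as Hm.
    apply (Rmult_le_compat_r (4 * (X + 1))) in Hm; [|lra].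
    assert (E : w0 / (4 * (X + 1)) * (4 * (X + 1)) = w0) by (field; repeat split; lra). fold eps in Hm. lra. }
  assert (Heps2 : eps * (8 * (alpha + 1) * (M + 1)) <= eta).
  { pose proof (Rmin_r (w0 / (4 * (X + 1))) (eta / (8 * (alpha + 1) * (M + 1)))) as Hm.
    apply (Rmult_le_compat_r (8 * (alpha + 1) * (M + 1))) in Hm; [|nra].
    assert (E : eta / (8 * (alpha + 1) * (M + 1)) * (8 * (alpha + 1) * (M + 1)) = eta) by (field; repeat split; nra). fold eps in Hm. lra. }
  set (B := eps * sigma ^ 2 + eta).
  assert (HB : 0 <= B) by (unfold B; nra).
  set (z := fun t q => W t q - (eps * q ^ 2 + (- B) * t + B * T)).
  assert (Hz0 : 0 < z t0 p0).
  { unfold z. fold w0. unfold B.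
    assert (0 <= eps * sigma ^ 2) by (apply Rmult_le_pos; lra).
    assert (eps * sigma ^ 2 * t0 >= 0) by nra.
    assert (eta * t0 >= 0) by nra.
    unfold X in Heps1. nra. }
  set (R := Rabs p0 + M / eps + 1).
  assert (HMe : M / eps * eps = M) by (field; lra).
  assert (HMe0 : 0 <= M / eps) by (apply Rdiv_le_0_compat; lra).
  assert (HR0 : Rabs p0 <= R) by (unfold R; lra).
  assert (HRp : - R <= p0 <= R) by (unfold Rabs in HR0; destruct (Rcase_abs p0); lra).
  destruct (evt2 z t0 T (- R) R ltac:(lra) ltac:(lra)) as [ts [ps [Hts [Hps Hmax]]]].
  { intros u v Hu Hv e He.
    destruct (Hc u v ltac:(lra) (e / 2) ltac:(lra)) as [d1 [Hd1 H1]].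
    destruct (poly_cont eps (- B) (B * T) u v (e / 2) ltac:(lra)) as [d2 [Hd2 H2]].
    exists (Rmin d1 d2). split; [apply Rmin_pos; auto|].
    intros u' v' Hu' Hv' Ha' Hb'.
    pose proof (Rmin_l d1 d2); pose proof (Rmin_r d1 d2).
    specialize (H1 u' v' ltac:(lra) ltac:(lra) ltac:(lra)).
    specialize (H2 u' v' ltac:(lra) ltac:(lra)).
    unfold z.
    replace (W u' v' - (eps * v' ^ 2 + - B * u' + B * T) - (W u v - (eps * v ^ 2 + - B * u + B * T)))
      with ((W u' v' - W u v) + - ((eps * v' ^ 2 + - B * u' + B * T) - (eps * v ^ 2 + - B * u + B * T))) by ring.
    eapply Rle_lt_trans; [apply Rabs_triang|]. rewrite Rabs_Ropp. lra. }
  { exists M. intros u v Hu Hv. unfold z. specialize (HM u v ltac:(lra)).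
    assert (0 <= eps * v ^ 2) by (pose proof (pow2_ge_0 v); nra).
    assert (0 <= B * (T - u)) by nra. nra. }
  assert (Hglob : forall t q, t0 <= t <= T -> z t q <= z ts ps).
  { intros t q Ht. destruct (Rle_or_lt (Rabs q) R) as [Hq|Hq].
    - apply Hmax; [lra|]. unfold Rabs in Hq; destruct (Rcase_abs q); lra.
    - pose proof (Hmax t0 p0 ltac:(lra) HRp).
      assert (Hq2 : q ^ 2 = Rabs q * Rabs q) by (rewrite <- pow2_abs; ring).
      assert (Hq1 : Rabs q > 1) by (unfold R in Hq; pose proof (Rabs_pos p0); lra).
      assert (Hq3 : Rabs q > M / eps) by (unfold R in Hq; pose proof (Rabs_pos p0); lra).
      assert (Rabs q * Rabs q > M / eps) by nra.
      assert (eps * q ^ 2 > M) by (rewrite Hq2; nra).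
      unfold z at 1. specialize (HM t q ltac:(lra)).
      assert (0 <= B * (T - t)) by nra. nra. }
  assert (Hzs : 0 < z ts ps) by (pose proof (Hglob t0 p0 ltac:(lra)); lra).
  assert (HtsT : ts < T).
  { destruct (Rle_lt_or_eq_dec ts T ltac:(lra)) as [|Heq]; auto. exfalso.
    rewrite Heq in Hzs. unfold z in Hzs. specialize (HTm ps).
    pose proof (pow2_ge_0 ps). nra. }
  assert (Hdp : forall q, derivable_pt_lim (fun q => z ts q) q (Wp ts q - 2 * eps * q)).
  { intros q. apply is_derive_Reals. unfold z.
    assert (Hp2 : is_derive (fun y => eps * y ^ 2 + - B * ts + B * T) q (2 * eps * q))
      by (auto_derive; [auto|ring]).
    exact (is_derive_minus _ _ _ _ _ (HWp ts q ltac:(lra)) Hp2). }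
  assert (Hdpp : derivable_pt_lim (fun q => Wp ts q - 2 * eps * q) ps (Wpp ts ps - 2 * eps)).
  { apply is_derive_Reals.
    assert (Hp2 : is_derive (fun y => 2 * eps * y) ps (2 * eps))
      by (auto_derive; [auto|ring]).
    exact (is_derive_minus _ _ _ _ _ (HWpp ts ps ltac:(lra)) Hp2). }
  assert (Hdt : derivable_pt_lim (fun s => z s ps) ts (Wt ts ps - - B)).
  { apply is_derive_Reals. unfold z.
    assert (Hp2 : is_derive (fun s => eps * ps ^ 2 + - B * s + B * T) ts (- B))
      by (auto_derive; [auto|ring]).
    exact (is_derive_minus _ _ _ _ _ (HWt ts ps ltac:(lra)) Hp2). }
  assert (Hf1 : Wp ts ps - 2 * eps * ps <= 0).
  { apply (rmax_lem _ _ _ (Hdp ps) 1 ltac:(lra)). intros h _. apply Hglob; lra. }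
  assert (Hf2 : 0 <= Wp ts ps - 2 * eps * ps).
  { apply (lmax_lem _ _ _ (Hdp ps) 1 ltac:(lra)). intros h _. apply Hglob; lra. }
  assert (Hf : Wp ts ps = 2 * eps * ps) by lra.
  assert (Hs : Wpp ts ps - 2 * eps <= 0).
  { apply (d2max_lem (fun q => z ts q) (fun q => Wp ts q - 2 * eps * q) ps); auto.
    all: try lra. all: intros x; apply Hglob; lra. }
  assert (Htd : Wt ts ps - - B <= 0).
  { apply (rmax_lem _ _ _ Hdt (T - ts) ltac:(lra)). intros h Hh. apply Hglob; lra. }
  specialize (Hpde ts ps ltac:(lra)). rewrite Hf in Hpde.
  assert (HQ : eps * ps ^ 2 < M).
  { unfold z in Hzs. specialize (HM ts ps ltac:(lra)).
    assert (0 <= B * (T - ts)) by nra. nra. }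
  set (Q := eps * ps ^ 2) in *.
  replace (alpha * (2 * eps * ps) ^ 2) with (4 * (alpha * eps * Q)) in Hpde by (unfold Q; ring).
  assert (H1 : alpha * eps * Q <= alpha * eps * M).
  { apply Rmult_le_compat_l; [nra|lra]. }
  assert (H2 : alpha * M * eps <= (alpha + 1) * (M + 1) * eps) by nra.
  assert (H3 : / 2 * sigma ^ 2 * Wpp ts ps <= / 2 * sigma ^ 2 * (2 * eps)).
  { apply Rmult_le_compat_l; nra. }
  unfold B in Htd. nra.
Qed.

Lemma cont_opp T f : cont_on_strip T f -> cont_on_strip T (fun t p => - f t p).
Proof.
  intros Hc t p Ht eps He. destruct (Hc t p Ht eps He) as [d [Hd H]].
  exists d. split; auto. intros. replace (- f t' p' - - f t p) with (- (f t' p' - f t p)) by ring.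
  rewrite Rabs_Ropp. auto.
Qed.

Theorem mainTheorem5 (N : nat) (T sigma lam kap : R)
    (H : nat -> R -> R) (v vt vp vpp : nat -> R -> R -> R) :
  (1 <= N)%nat -> 0 < T -> 0 < sigma -> 0 < lam -> 0 < kap ->
  (forall j, (j < N)%nat -> C2b (H j)) ->
  (forall p, sumN N (fun i => H i p) = 0) ->
  classical_solution N T sigma lam kap H v vt vp vpp ->
  forall t p, 0 <= t <= T -> Xstar N lam kap vp t p = 0.
Proof.
  intros HN HT Hsig Hlam Hkap _ HH Hsol.
  set (S := fun t p => sumN N (fun i => v i t p)).
  set (St := fun t p => sumN N (fun i => vt i t p)).
  set (Sp := fun t p => sumN N (fun i => vp i t p)).
  set (Spp := fun t p => sumN N (fun i => vpp i t p)).
  assert (HN1 : 0 < INR N + 1) by (pose proof (pos_INR N); lra).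
  set (c := lam / (kap * (INR N + 1))).
  assert (HXs : forall t p, Xstar N lam kap vp t p = c * Sp t p).
  { intros t p. unfold Xstar, Xdot. rewrite sumN_Xd. unfold c, Sp. field. repeat split; lra. }
  set (alpha := lam * c - kap * c ^ 2).
  assert (Ha : 0 <= alpha).
  { replace alpha with (lam ^ 2 * INR N / (kap * (INR N + 1) ^ 2)) by (unfold alpha, c; field; repeat split; lra).
    apply Rdiv_le_0_compat. pose proof (pos_INR N). nra. apply Rmult_lt_0_compat; [lra|apply pow_lt; lra]. }
  assert (Hdt : forall t p, 0 < t < T -> is_derive (fun s => S s p) t (St t p)).
  { intros t p Ht. unfold S, St.
    apply (is_derive_sumN N (fun i s => v i s p) (fun i => vt i t p)).
    intros i Hi. apply (Hsol i Hi). auto. }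
  assert (Hdp : forall t p, 0 <= t <= T -> is_derive (fun q => S t q) p (Sp t p)).
  { intros t p Ht. unfold S, Sp.
    apply (is_derive_sumN N (fun i q => v i t q) (fun i => vp i t p)).
    intros i Hi. apply (Hsol i Hi). auto. }
  assert (Hdpp : forall t p, 0 <= t <= T -> is_derive (fun q => Sp t q) p (Spp t p)).
  { intros t p Ht. unfold Sp, Spp.
    apply (is_derive_sumN N (fun i q => vp i t q) (fun i => vpp i t p)).
    intros i Hi. apply (Hsol i Hi). auto. }
  assert (Hc : cont_on_strip T S).
  { apply cont_sumN. intros i Hi. apply (Hsol i Hi). }
  destruct (bnd_sumN N T v ltac:(intros i Hi; apply (Hsol i Hi))) as [M HM].
  assert (HTm : forall p, S T p = 0).
  { intros p. unfold S. rewrite <- (HH p). apply sumN_ext. intros i Hi. apply (Hsol i Hi). }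
  assert (Hpde : forall t p, 0 < t < T ->
     St t p + / 2 * sigma ^ 2 * Spp t p + alpha * Sp t p ^ 2 = 0).
  { intros t p Ht.
    assert (E : sumN N (fun j => vt j t p + / 2 * sigma ^ 2 * vpp j t p
           + lam * Xstar N lam kap vp t p * vp j t p
           - kap * Xdot N lam kap vp j t p * Xstar N lam kap vp t p) = 0).
    { rewrite <- (sumN_zero N). apply sumN_ext. intros i Hi.
      symmetry. apply (Hsol i Hi). auto. }
    rewrite sumN_lin in E. fold (Xstar N lam kap vp t p) in E.
    rewrite HXs in E. fold (St t p) (Spp t p) (Sp t p) in E.
    unfold alpha. rewrite <- E. ring. }
  assert (Hle : forall t p, 0 <= t <= T -> S t p <= 0).
  { apply (maxp T sigma alpha S St Sp Spp); auto.
    - exists M. intros t p Ht. specialize (HM t p Ht). unfold S. unfold Rabs in HM; destruct Rcase_abs; lra.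
    - intros p; rewrite HTm; lra.
    - intros t p Ht. rewrite Hpde; lra. }
  assert (Hge : forall t p, 0 <= t <= T -> - S t p <= 0).
  { apply (maxp T sigma alpha (fun t p => - S t p) (fun t p => - St t p) (fun t p => - Sp t p) (fun t p => - Spp t p)); auto.
    - intros t p Ht. exact (is_derive_opp _ _ _ (Hdt t p Ht)).
    - intros t p Ht. exact (is_derive_opp _ _ _ (Hdp t p Ht)).
    - intros t p Ht. exact (is_derive_opp _ _ _ (Hdpp t p Ht)).
    - apply cont_opp; auto.
    - exists M. intros t p Ht. specialize (HM t p Ht). unfold S. unfold Rabs in HM; destruct Rcase_abs; lra.
    - intros p; rewrite HTm; lra.
    - intros t p Ht. specialize (Hpde t p Ht).
      assert (0 <= alpha * Sp t p ^ 2) by (apply Rmult_le_pos; [auto|apply pow2_ge_0]).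
      nra. }
  intros t p Ht. rewrite HXs.
  assert (E0 : Sp t p = 0).
  { rewrite <- (is_derive_unique _ _ _ (Hdp t p Ht)).
    rewrite (Derive_ext (fun q => S t q) (fun _ => 0)).
    - apply Derive_const.
    - intros q. specialize (Hle t q Ht). specialize (Hge t q Ht). lra. }
  rewrite E0. ring.
Qed.
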